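(* Let $X$ be a real Banach space and let $T\subset X\times X^*$ be a maximal monotone operator which is a linear subspace of $X\times X^*$. Then (1) $T^\vdash\subset\{(x,x^* )\mid \varphi_T(x,x^* )=0\}$; (2) $T\cap T^\vdash=T\cap\{(x,x^* )\mid \langle x,x^*\rangle=0\}$.
   Context: $\langle x,x^*\rangle=x^*(x)$. Operators $X\rightrightarrows X^*$ are identified with subsets of $X\times X^*$; $T$ is monotone if $\langle x-y,x^*-y^*\rangle\ge0$ for all $(x,x^* ),(y,y^* )\in T$, maximal monotone if moreover it is maximal under inclusion among monotone operators. The Fitzpatrick function of $T$ is $\varphi_T(x,x^* )=\sup_{(y,y^* )\in T}\big(\langle x,y^*\rangle+\langle y,x^*\rangle-\langle y,y^*\rangle\big)$. For $B\subset X\times X^*$, $B^\vdash=\{(y,y^* )\mid \langle x,y^*\rangle+\langle y,x^*\rangle=0\ \forall (x,x^* )\in B\}$. *)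

(* Defs.v *)
From HB Require Import structures.
From mathcomp Require Import all_boot all_order all_algebra.
From mathcomp Require Import all_classical all_reals all_analysis.
Set Implicit Arguments. Unset Strict Implicit. Unset Printing Implicit Defensive.
Import Order.TTheory GRing.Theory Num.Theory.
Import numFieldNormedType.Exports.
Local Open Scope classical_set_scope.
Local Open Scope ring_scope.

(* Elements of X^* are represented as functions X -> R which are linear and
   continuous; the pairing <x, x^*> is application x^* x. *)
Section Defs.
Variables (R : realType) (X : normedModType R).

Definition is_dual (f : X -> R) : Prop :=
  (forall (a : R) (u v : X), f (a *: u + v) = a * f u + f v) /\ continuous f.

Definition XXs : set (X * (X -> R)) := [set p | is_dual p.2].

Definition monotone (T : set (X * (X -> R))) : Prop :=
  T `<=` XXs /\
  forall p q, T p -> T q -> 0 <= (p.2 - q.2) (p.1 - q.1).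

Definition maximal_monotone (T : set (X * (X -> R))) : Prop :=
  monotone T /\ forall S, monotone S -> T `<=` S -> S = T.

Definition linear_subspace (T : set (X * (X -> R))) : Prop :=
  T `<=` XXs /\ T (0, fun _ => 0) /\
  (forall p q, T p -> T q -> T (p.1 + q.1, fun x => p.2 x + q.2 x)) /\
  (forall (a : R) p, T p -> T (a *: p.1, fun x => a * p.2 x)).

Definition fitzpatrick (T : set (X * (X -> R))) (p : X * (X -> R)) : \bar R :=
  ereal_sup [set ((q.2 p.1 + p.2 q.1 - q.2 q.1)%:E) | q in T].

Definition perp_set (B : set (X * (X -> R))) : set (X * (X -> R)) :=
  [set q | XXs q /\ forall p, B p -> p.2 q.1 + q.2 p.1 = 0].
End Defs.

(* Main.v *)
Require Import Defs.
From mathcomp Require Import all_boot all_order all_algebra.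
From mathcomp Require Import all_classical all_reals all_analysis.
From mathcomp Require Import ring lra.
Import numFieldNormedType.Exports.
Import Order.TTheory GRing.Theory Num.Theory.
Local Open Scope classical_set_scope.
Local Open Scope ring_scope.

Theorem lemma1 (R : realType) (X : completeNormedModType R)
  (T : set (X * (X -> R))) :
  maximal_monotone T -> linear_subspace T ->
  perp_set T `<=` [set p | fitzpatrick T p = 0%:E] /\
  T `&` perp_set T = T `&` [set p | p.2 p.1 = 0].
Proof.
move=> [[TX Tmon] _] [_ [T0 [TD TZ]]].
have pos : forall q, T q -> 0 <= q.2 q.1.
  move=> q Tq; have := Tmon q _ Tq T0; rewrite /= !subr0.
  by [].
split.
  move=> p [Xp Pp] /=; rewrite /fitzpatrick; apply/eqP; rewrite eq_le; apply/andP; split.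
    apply: ub_ereal_sup => _ [q Tq <-]; rewrite lee_fin.
    have := Pp q Tq; have := pos q Tq; lra.
  apply: ereal_sup_ubound; exists (0, fun _ => 0) => //=.
  have := Pp _ T0; rewrite /= => h; congr (_%:E); lra.
apply/seteqP; split => p [Tp H]; split => //=.
  by case: H => _ /(_ p Tp); lra.
split; first exact: TX.
move=> q Tq.
set a := q.2 p.1 + p.2 q.1.
set b := q.2 q.1.
have hb : 0 <= b := pos q Tq.
have key : forall t, 0 <= t * a + t ^+ 2 * b.
  move=> t.
  have Tr := TD _ _ Tp (TZ t q Tq).
  have := pos _ Tr; rewrite /=.
  have [[lp _] [lq _]] := (TX _ Tp, TX _ Tq).
  rewrite (addrC p.1) lp lq /=.
  rewrite H /a /b expr2 => h; lra.
have := key (- a / (b + 1)).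
set t := - a / (b + 1).
have ht : t * (b + 1) = - a by rewrite /t mulfVK //; lra.
move=> h; clearbody t.
have e : t ^+ 2 * b = t * (- a - t).
  rewrite -ht expr2; ring.
rewrite e in h.
have e2 : t * a + t * (- a - t) = - t ^+ 2 by rewrite expr2; ring.
rewrite e2 oppr_ge0 in h.
have t0 : t = 0.
  have : t ^+ 2 == 0 by rewrite eq_le h sqr_ge0.
  by rewrite expf_eq0 /= => /eqP.
by move: ht; rewrite t0 mul0r => /esym/eqP; rewrite oppr_eq0 => /eqP.
Qed.
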